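(* Consider the system (P) described in the context, and its constant (spatially homogeneous, time-independent) nonnegative steady states $(U,V)$. Then: (i) if $b\le0$, the only such steady state is $E_0=(0,0)$; (ii) if $b>0$ and $\frac{b\beta}{\alpha d e^{\alpha\tau}}\le1$, the constant steady states are $E_0=(0,0)$ and $E_1=(b/d,0)$; (iii) if $\frac{b\beta}{\alpha d e^{\alpha\tau}}>1$, then besides $E_0=(0,0)$ and $E_1=(b/d,0)$ there is a unique constant steady state $E_3=(U_3,V_3)$ with $U_3>0$ and $V_3>0$.
   Context: Let $\alpha,\beta,d,h>0$, $\kappa>0$, $d_1,d_2>0$, $\tau>0$ be constants and $b\in\mathbb{R}$. Let $\Gamma(x,y,a)$, $x,y\in[0,\pi]$, $a>0$, be the Green's function of $\partial_aW=d_2\partial_{xx}W-\alpha W$ on $(0,\pi)$ with Neumann conditions $\partial_xW(a,0)=\partial_xW(a,\pi)=0$ (so $\int_0^\pi\Gamma(x,y,a)\,dy=e^{-\alpha a}$). System (P): for $t>0$, $x\in(0,\pi)$, $\partial_tU=d_1\partial_{xx}U-\frac{\beta UV}{1+hV}+U\Big[b-dU-\frac{\beta}{\kappa}\int_0^\tau\int_0^\pi\Gamma(x,y,a)\frac{U(t-a,y)V(t-a,y)}{1+hV(t-a,y)}\,dy\,da\Big]$, $\partial_tV=d_2\partial_{xx}V-\alpha V+\beta\int_0^\pi\Gamma(x,y,\tau)\frac{U(t-\tau,y)V(t-\tau,y)}{1+hV(t-\tau,y)}\,dy$, with $\partial_xU=\partial_xV=0$ at $x=0,\pi$. *)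

(* Defs.v *)
From Stdlib Require Import Reals Lra.
From Coquelicot Require Import Coquelicot.
Open Scope R_scope.

(* Abstract hypotheses on the Neumann Green's function Gamma(x,y,a) of
   dW/da = d2 W_xx - alpha W on (0,pi): for every x in [0,pi] and a > 0,
   y |-> Gamma x y a is integrable on [0,pi] with integral e^{-alpha a}. *)
Definition green_mass (alpha : R) (Gamma : R -> R -> R -> R) : Prop :=
  forall x a, 0 <= x <= PI -> 0 < a ->
    ex_RInt (fun y => Gamma x y a) 0 PI /\
    RInt (fun y => Gamma x y a) 0 PI = exp (- alpha * a).

Definition incid (h U V : R) : R := U * V / (1 + h * V).

(* Right-hand side of the U-equation of (P) evaluated at the constant
   (space- and time-independent) functions U(t,x)=U, V(t,x)=V, at point x
   (the diffusion term vanishes for constants). *)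
Definition rhsU (Gamma : R -> R -> R -> R) (beta h b d kappa tau : R)
  (U V x : R) : R :=
  - beta * incid h U V
  + U * (b - d * U
         - beta / kappa *
           RInt (fun a => RInt (fun y => Gamma x y a * incid h U V) 0 PI) 0 tau).

Definition rhsV (Gamma : R -> R -> R -> R) (alpha beta h tau : R)
  (U V x : R) : R :=
  - alpha * V + beta * RInt (fun y => Gamma x y tau * incid h U V) 0 PI.

(* (U,V) is a constant nonnegative steady state of (P): U, V >= 0 and both
   right-hand sides vanish for every x in (0,pi) (Neumann conditions hold
   trivially for constants). *)
Definition const_steady_state (Gamma : R -> R -> R -> R)
  (alpha beta d h kappa tau b : R) (U V : R) : Prop :=
  0 <= U /\ 0 <= V /\
  forall x, 0 < x < PI ->
    rhsU Gamma beta h b d kappa tau U V x = 0 /\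
    rhsV Gamma alpha beta h tau U V x = 0.

(* Main.v *)
Require Import Defs.
From Stdlib Require Import Reals Lra Psatz.
From Coquelicot Require Import Coquelicot.
Open Scope R_scope.

Lemma outer_eval alpha Gamma (HGamma : green_mass alpha Gamma) tau (Htau : 0 < tau) x c :
  0 < x < PI ->
  RInt (fun a => RInt (fun y => Gamma x y a * c) 0 PI) 0 tau
  = c * RInt (fun a => exp (- alpha * a)) 0 tau.
Proof.
  intros Hx.
  rewrite (RInt_ext _ (fun a => @scal R_Ring R_ModuleSpace c (exp (- alpha * a)))).
  - rewrite (@RInt_scal R_CompleteNormedModule). reflexivity.
    apply ex_RInt_continuous. intros z _. apply (ex_derive_continuous (K:=R_AbsRing) (V:=R_NormedModule) (fun a => exp (- alpha * a))). auto_derive. trivial.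
  - intros a Ha. rewrite Rmin_left in Ha by lra. rewrite Rmax_right in Ha by lra.
    destruct (HGamma x a ltac:(lra) ltac:(lra)) as [Hex Hint].
    rewrite (RInt_ext _ (fun y => @scal R_Ring R_ModuleSpace c (Gamma x y a))).
    + rewrite (@RInt_scal R_CompleteNormedModule) by exact Hex. rewrite Hint. reflexivity.
    + intros y _. unfold scal; simpl; unfold mult; simpl. ring.
Qed.

Lemma inner_eval alpha Gamma (HGamma : green_mass alpha Gamma) tau (Htau : 0 < tau) x c :
  0 < x < PI ->
  RInt (fun y => Gamma x y tau * c) 0 PI = c * exp (- alpha * tau).
Proof.
  intros Hx. destruct (HGamma x tau ltac:(lra) Htau) as [Hex Hint].
  rewrite (RInt_ext _ (fun y => @scal R_Ring R_ModuleSpace c (Gamma x y tau))).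
  + rewrite (@RInt_scal R_CompleteNormedModule) by exact Hex. rewrite Hint. reflexivity.
  + intros y _. unfold scal; simpl; unfold mult; simpl. ring.
Qed.

Lemma K_nonneg alpha tau : 0 < tau -> 0 <= RInt (fun a => exp (- alpha * a)) 0 tau.
Proof.
  intros Ht. apply RInt_ge_0. lra.
  apply (ex_RInt_continuous (V:=R_CompleteNormedModule)). intros z _. apply (ex_derive_continuous (K:=R_AbsRing) (V:=R_NormedModule) (fun a => exp (- alpha * a))). auto_derive. trivial.
  intros; left; apply exp_pos.
Qed.

Lemma quad A h B beta (HA : 0 < A) (Hh : 0 < h) (HB : 0 < B) (Hb : 0 < beta) :
  let p := h * B - A - beta in
  let V3 := (p + sqrt (p * p + 4 * A * h * B)) / (2 * A * h) in
  0 < V3 /\ A * h * V3 * V3 - p * V3 - B = 0 /\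
  forall V, 0 < V -> A * h * V * V - p * V - B = 0 -> V = V3.
Proof.
  intros p V3.
  set (D := p * p + 4 * A * h * B).
  assert (HAh : 0 < A * h) by nra.
  assert (HAhB : 0 < A * h * B) by nra.
  assert (HD : 0 <= D) by (unfold D; nra).
  assert (Hs : sqrt D * sqrt D = D) by (apply sqrt_sqrt; lra).
  assert (Hs0 : 0 <= sqrt D) by apply sqrt_pos.
  assert (Hgt : p < sqrt D /\ - p < sqrt D).
  { assert (0 < 4 * A * h * B) by lra. split.
    - destruct (Rle_lt_dec (sqrt D) p) as [Hl|Hl]; [|exact Hl].
      exfalso. assert (sqrt D * sqrt D <= p * p) by (apply Rmult_le_compat; lra).
      unfold D in *. lra.
    - destruct (Rle_lt_dec (sqrt D) (-p)) as [Hl|Hl]; [|exact Hl].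
      exfalso. assert (sqrt D * sqrt D <= (-p) * (-p)) by (apply Rmult_le_compat; lra).
      unfold D in *. lra. }
  assert (H2Ah : 0 < 2 * A * h) by lra. destruct Hgt as [Hg1 Hg2].
  split; [|split].
  - unfold V3. fold D. apply Rdiv_lt_0_compat; lra.
  - assert (H2 : 2 * A * h * V3 = p + sqrt D) by (unfold V3; fold D; field; lra).
    apply Rmult_eq_reg_l with (4 * A * h); [|lra].
    replace (4 * A * h * (A * h * V3 * V3 - p * V3 - B)) with
      ((2 * A * h * V3) * (2 * A * h * V3) - 2 * p * (2 * A * h * V3) - 4 * A * h * B) by ring.
    rewrite H2, Rmult_0_r.
    replace ((p + sqrt D) * (p + sqrt D) - 2 * p * (p + sqrt D) - 4 * A * h * B)
      with (sqrt D * sqrt D - D) by (unfold D; ring). lra.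
  - intros V HV Heq.
    assert (Hsq : (2 * A * h * V - p) * (2 * A * h * V - p) = sqrt D * sqrt D).
    { rewrite Hs. unfold D. ring_simplify. nra. }
    assert (Hf : (2 * A * h * V - p - sqrt D) * (2 * A * h * V - p + sqrt D) = 0) by nra.
    apply Rmult_integral in Hf. destruct Hf as [Hf|Hf].
    + unfold V3. fold D. field_simplify_eq; lra.
    + nra.
Qed.
Lemma ss_iff alpha beta d h kappa tau b Gamma (HGamma : green_mass alpha Gamma) (Htau : 0 < tau) U V :
  const_steady_state Gamma alpha beta d h kappa tau b U V <->
  0 <= U /\ 0 <= V /\
  - beta * incid h U V + U * (b - d * U - beta / kappa *
      (incid h U V * RInt (fun a => exp (- alpha * a)) 0 tau)) = 0 /\
  - alpha * V + beta * (incid h U V * exp (- alpha * tau)) = 0.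
Proof.
  unfold const_steady_state, rhsU, rhsV. split.
  - intros [HU [HV H]]. assert (Hx : 0 < PI / 2 < PI) by (pose proof PI_RGT_0; lra).
    destruct (H _ Hx) as [H1 H2].
    rewrite (outer_eval alpha Gamma HGamma tau Htau _ _ Hx) in H1.
    rewrite (inner_eval alpha Gamma HGamma tau Htau _ _ Hx) in H2.
    tauto.
  - intros [HU [HV [H1 H2]]]. split; [exact HU|split; [exact HV|]].
    intros x Hx.
    rewrite (outer_eval alpha Gamma HGamma tau Htau _ _ Hx).
    rewrite (inner_eval alpha Gamma HGamma tau Htau _ _ Hx). tauto.
Qed.

Lemma incid0 h U : incid h U 0 = 0.
Proof. unfold incid. rewrite !Rmult_0_r, Rplus_0_r. unfold Rdiv. ring. Qed.

Lemma incid_rel h U V : 0 < h -> 0 <= V -> incid h U V * (1 + h * V) = U * V.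
Proof. intros. unfold incid. field. nra. Qed.

Lemma alg_pos alpha beta d h kappa b K E U V c
  (Ha : 0 < alpha) (Hb : 0 < beta) (Hd : 0 < d) (Hh : 0 < h) (Hk : 0 < kappa)
  (HK : 0 <= K) (HE : 0 < E) (HU : 0 <= U) (HV : 0 < V)
  (Hc : c * (1 + h * V) = U * V)
  (H1 : - beta * c + U * (b - d * U - beta / kappa * (c * K)) = 0)
  (H2 : - alpha * V + beta * (c * / E) = 0) :
  c = alpha * E / beta * V /\ U = alpha * E / beta * (1 + h * V) /\ d * U < b.
Proof.
  assert (Hc1 : c = alpha * E / beta * V).
  { assert (H : beta * (c * / E) = alpha * V) by lra.
    transitivity ((beta * (c * / E)) * E / beta). field; lra.
    rewrite H. field; lra. }
  assert (Hm : 0 < alpha * E / beta) by (apply Rdiv_lt_0_compat; nra).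
  assert (HU1 : U = alpha * E / beta * (1 + h * V)).
  { apply Rmult_eq_reg_r with V; [|lra]. rewrite <- Hc, Hc1. ring. }
  split; [exact Hc1|split; [exact HU1|]].
  assert (Hcp : 0 < c) by (rewrite Hc1; nra).
  assert (HUp : 0 < U) by (rewrite HU1; nra).
  set (X := b - d * U - beta / kappa * (c * K)) in H1.
  assert (HX : 0 < X).
  { destruct (Rle_lt_dec X 0) as [Hl|Hl]; [|exact Hl]. exfalso. nra. }
  assert (0 <= beta / kappa * (c * K)).
  { apply Rmult_le_pos. left; apply Rdiv_lt_0_compat; lra. nra. }
  unfold X in HX. lra.
Qed.

Theorem theorem5p1 (alpha beta d h kappa d1 d2 tau b : R)
  (Gamma : R -> R -> R -> R)
  (Halpha : 0 < alpha) (Hbeta : 0 < beta) (Hd : 0 < d) (Hh : 0 < h)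
  (Hkappa : 0 < kappa) (Hd1 : 0 < d1) (Hd2 : 0 < d2) (Htau : 0 < tau)
  (HGamma : green_mass alpha Gamma) :
  (b <= 0 ->
     forall U V, const_steady_state Gamma alpha beta d h kappa tau b U V <->
                 (U = 0 /\ V = 0)) /\
  (0 < b -> b * beta / (alpha * d * exp (alpha * tau)) <= 1 ->
     forall U V, const_steady_state Gamma alpha beta d h kappa tau b U V <->
                 ((U = 0 /\ V = 0) \/ (U = b / d /\ V = 0))) /\
  (b * beta / (alpha * d * exp (alpha * tau)) > 1 ->
     exists U3 V3, 0 < U3 /\ 0 < V3 /\
       forall U V, const_steady_state Gamma alpha beta d h kappa tau b U V <->
                   ((U = 0 /\ V = 0) \/ (U = b / d /\ V = 0) \/
                    (U = U3 /\ V = V3))).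
Proof.
  assert (HE : 0 < exp (alpha * tau)) by apply exp_pos.
  assert (HEi : exp (- alpha * tau) = / exp (alpha * tau))
    by (rewrite <- exp_Ropp; f_equal; ring).
  pose proof (K_nonneg alpha tau Htau) as HK.
  pose proof (fun U V => ss_iff alpha beta d h kappa tau b Gamma HGamma Htau U V) as Hss.
  set (E := exp (alpha * tau)) in *.
  set (K := RInt (fun a => exp (- alpha * a)) 0 tau) in *.
  rewrite HEi in Hss.
  set (ss := const_steady_state Gamma alpha beta d h kappa tau b) in *.
  set (m := alpha * E / beta).
  assert (Hm : 0 < m) by (apply Rdiv_lt_0_compat; nra).
  assert (Hpos : forall U V, ss U V -> 0 < V ->
            U = m * (1 + h * V) /\ incid h U V = m * V /\ d * U < b).
  { intros U V H HV. apply Hss in H. destruct H as [HU [_ [H1 H2]]].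
    destruct (alg_pos alpha beta d h kappa b K E U V (incid h U V) Halpha Hbeta Hd Hh Hkappa
      HK HE HU HV (incid_rel h U V Hh ltac:(lra)) H1 H2) as [A1 [A2 A3]].
    unfold m. tauto. }
  assert (Hzero : forall U, ss U 0 -> U = 0 \/ U = b / d).
  { intros U H. apply Hss in H. destruct H as [HU [_ [H1 H2]]].
    rewrite incid0 in H1. 
    assert (Hf : U * (b - d * U) = 0) by lra.
    apply Rmult_integral in Hf. destruct Hf as [Hf|Hf]; [left; exact Hf|right].
    field_simplify_eq; lra. }
  assert (Hback0 : ss 0 0).
  { apply Hss. rewrite incid0. repeat split; try lra. }
  assert (Hback1 : 0 <= b -> ss (b / d) 0).
  { intros Hb. apply Hss. rewrite incid0. repeat split; try lra.
    unfold Rdiv. apply Rmult_le_pos; [lra|left; apply Rinv_0_lt_compat; lra].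
    field_simplify; lra. }
  assert (Hrat : b * beta / (alpha * d * E) > 1 <-> d * m < b).
  { replace (b * beta / (alpha * d * E)) with (b / (d * m)) by (unfold m; field; lra).
    assert (Hdm : 0 < d * m) by nra.
    assert (Hq : b / (d * m) * (d * m) = b) by (field; lra).
    split; intros; nra. }
  split; [|split].
  - intros Hb U V; split.
    + intros H. destruct (Hss U V) as [Hf _]. destruct (Hf H) as [HU [HV _]].
      destruct (Rle_lt_or_eq_dec 0 V HV) as [Vp|V0].
      * destruct (Hpos U V H Vp) as [A1 [A2 A3]]. exfalso.
        assert (0 < U) by (rewrite A1; nra). nra.
      * subst V. destruct (Hzero U H) as [A|A]; [tauto|].
        split; [|reflexivity].
        assert (b / d <= 0).
        { unfold Rdiv. assert (0 < / d) by (apply Rinv_0_lt_compat; lra). nra. }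
        lra.
    + intros [-> ->]. exact Hback0.
  - intros Hb Hr U V; split.
    + intros H. destruct (Hss U V) as [Hf _]. destruct (Hf H) as [HU [HV _]].
      destruct (Rle_lt_or_eq_dec 0 V HV) as [Vp|V0].
      * destruct (Hpos U V H Vp) as [A1 [A2 A3]]. exfalso.
        assert (Hnn : 0 <= d * m * (h * V)) by (apply Rmult_le_pos; nra).
        assert (d * m < b) by (rewrite A1 in A3;
          replace (d * (m * (1 + h * V))) with (d * m + d * m * (h * V)) in A3 by ring; lra).
        apply Hrat in H0. lra.
      * subst V. destruct (Hzero U H) as [A|A]; tauto.
    + intros [[-> ->]|[-> ->]]. exact Hback0. apply Hback1; lra.
  - intros Hr. apply Hrat in Hr.
    assert (Hb : 0 < b) by nra.
    set (B := b - d * m).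
    set (A := d * m * h + beta / kappa * m * K).
    assert (HA : 0 < A).
    { unfold A. assert (0 <= beta / kappa * m * K).
      { apply Rmult_le_pos; [|exact HK]. apply Rmult_le_pos; [|lra].
        left; apply Rdiv_lt_0_compat; lra. }
      assert (0 < d * m * h) by (apply Rmult_lt_0_compat; [apply Rmult_lt_0_compat|]; lra).
      lra. }
    assert (HB : 0 < B) by (unfold B; lra).
    pose proof (quad A h B beta HA Hh HB Hbeta) as Q. cbv zeta in Q.
    set (p := h * B - A - beta) in Q.
    set (V3 := (p + sqrt (p * p + 4 * A * h * B)) / (2 * A * h)) in Q.
    destruct Q as [HV3 [HQ3 HQ]].
    exists (m * (1 + h * V3)), V3.
    assert (Key : forall U V, 0 < V -> U = m * (1 + h * V) -> incid h U V = m * V ->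
      - beta * incid h U V + U * (b - d * U - beta / kappa * (incid h U V * K))
      = - m * (A * h * V * V - p * V - B)).
    { intros U V _ -> ->. unfold p, A, B. field. lra. }
    split; [apply Rmult_lt_0_compat; nra|split; [exact HV3|]].
    intros U V; split.
    + intros H. destruct (Hss U V) as [Hf _]. destruct (Hf H) as [HU [HV [H1 _]]].
      destruct (Rle_lt_or_eq_dec 0 V HV) as [Vp|V0].
      * destruct (Hpos U V H Vp) as [A1 [A2 A3]].
        rewrite (Key U V Vp A1 A2) in H1.
        assert (HQV : A * h * V * V - p * V - B = 0).
        { apply Rmult_eq_reg_l with (- m); [|lra]. lra. }
        pose proof (HQ V Vp HQV). right; right. split; [|exact H0].
        rewrite A1, H0. reflexivity.
      * subst V. destruct (Hzero U H) as [A0|A0]; tauto.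
    + intros [[-> ->]|[[-> ->]|[-> ->]]].
      * exact Hback0.
      * apply Hback1; lra.
      * assert (Hi : incid h (m * (1 + h * V3)) V3 = m * V3).
        { unfold incid. field. nra. }
        apply Hss. split; [left; apply Rmult_lt_0_compat; nra|split; [lra|split]].
        -- rewrite (Key _ V3 HV3 eq_refl Hi), HQ3. ring.
        -- rewrite Hi. unfold m. field. lra.
Qed.
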